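(* Let $n$ be a positive integer, $\pi_1,\pi_2\in\mathrm{NC}_B(n)$, $\psi(\pi_1)=(\sigma_1,x_1)$ and $\psi(\pi_2)=(\sigma_2,x_2)$. Then $\pi_1\le\pi_2$ if and only if $\sigma_1\le\sigma_2$ and one of the following holds: (1) $x_1=x_2=\emptyset$; (2) $x_2$ is an edge $(a,b)$ of $\sigma_2$, and $x_1$ is the unique minimal length edge $(i,j)$ of $\sigma_1$ with $i\le a<b\le j$ if such an edge exists, and $x_1=\emptyset$ otherwise; (3) $x_2$ is a block of $\sigma_2$ and $x_1$ is a block of $\sigma_1$ with $x_1\subseteq x_2$; (4) $x_2$ is a block of $\sigma_2$ and $x_1$ is an edge $(i,j)$ of $\sigma_1$ with $i,j\in x_2$; (5) $x_2$ is a block of $\sigma_2$, and $x_1$ is the minimal length edge $(i,j)$ of $\sigma_1$ with $i<\min(x_2)\le\max(x_2)<j$ if such an edge exists, and $x_1=\emptyset$ otherwise.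
   Context: $[\pm n]=\{1,\dots,n,-1,\dots,-n\}$. A partition of type $B_n$ is a partition $\pi$ of $[\pm n]$ such that $-B$ is a block whenever $B$ is, with at most one block (zero block) satisfying $B=-B$; it is noncrossing if, in the linear order $1<\cdots<n<-1<\cdots<-n$, there are no $a<b<c<d$ with $a,c$ in one block and $b,d$ in another. $\mathrm{NC}_B(n)$ is the set of these, ordered by refinement; $\mathrm{NC}(n)$ is the poset of noncrossing partitions of $[n]$ ordered by refinement. An edge of $\sigma\in\mathrm{NC}(n)$ is a pair $(i,j)$, $i<j$, with $i,j$ in a common block containing no integer strictly between them; its length is $j-i$. The map $\psi$: given $\pi\in\mathrm{NC}_B(n)$, let $\eta\in\mathrm{NC}(n)$ be obtained by deleting all negative integers from the blocks of $\pi$ (discarding empty sets), and let $X$ be the set of blocks $A$ of $\eta$ such that the block of $\pi$ containing $A$ also contains a negative integer. Write $X=\{A_1,\dots,A_m\}$ with $\max A_1<\cdots<\max A_m$. Let $\sigma$ be obtained from $\eta$ by merging $A_i$ and $A_{m+1-i}$ for $i=1,\dots,\lfloor m/2\rfloor$, and let $x=\emptyset$ if $m=0$, $x=(\max A_{m/2},\min A_{m/2+1})$ if $m>0$ is even, and $x=A_{(m+1)/2}$ if $m$ is odd. Then $\psi(\pi)=(\sigma,x)$. *)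

(* Defs.v *)
From mathcomp Require Import all_boot all_order.
Set Implicit Arguments. Unset Strict Implicit. Unset Printing Implicit Defensive.

(* Encodings.
   - [n] = {1,...,n} is encoded by 'I_n : the ordinal k stands for k+1.
   - [+-n] = {1,...,n,-1,...,-n} is encoded by 'I_(n+n) following the
     linear order 1 < ... < n < -1 < ... < -n : the ordinal k < n stands
     for k+1 and the ordinal k >= n stands for -(k-n+1).  Hence the order
     on ordinals is exactly the linear order used for noncrossingness.   *)

Definition labelB (n : nat) (k : nat) : nat * bool :=
  (* (absolute value, is_negative) of the element encoded by k *)
  if k < n then (k.+1, false) else ((k - n).+1, true).

Definition negB_nat (n k : nat) : nat := if k < n then k + n else k - n.

Lemma negB_nat_lt n (k : 'I_(n + n)) : negB_nat n k < n + n.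
Proof.
rewrite /negB_nat; case: ifP => h; first by rewrite ltn_add2r.
by apply: leq_ltn_trans (leq_subr _ _) (ltn_ord k).
Qed.

Definition negB n (k : 'I_(n + n)) : 'I_(n + n) := Ordinal (negB_nat_lt k).

Definition noncrossing m (P : {set {set 'I_m}}) : Prop :=
  forall B1 B2, B1 \in P -> B2 \in P -> B1 != B2 ->
  forall a b c d : 'I_m, a < b -> b < c -> c < d ->
    a \in B1 -> c \in B1 -> b \in B2 -> d \in B2 -> False.

Definition refines m (P Q : {set {set 'I_m}}) : Prop :=
  forall B, B \in P -> exists2 C, C \in Q & B \subset C.

Definition is_NC n (P : {set {set 'I_n}}) : Prop :=
  partition P [set: 'I_n] /\ noncrossing P.

Definition is_NCB n (P : {set {set 'I_(n + n)}}) : Prop :=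
  [/\ partition P [set: 'I_(n + n)],
      (forall B, B \in P -> [set negB x | x in B] \in P),
      (forall B1 B2, B1 \in P -> B2 \in P ->
          [set negB x | x in B1] = B1 -> [set negB x | x in B2] = B2 -> B1 = B2)
    & noncrossing P].

(* max / min of a (nonempty) subset of 'I_n, as natural numbers (0-based). *)
Definition maxs n (A : {set 'I_n}) : nat := \max_(i in A) (i : nat).
Definition mins n (A : {set 'I_n}) : nat := \big[minn/n]_(i in A) (i : nat).

(* The second component of psi: empty, an edge (a,b) (0-based values),
   or a block. *)
Inductive xdata (n : nat) : Type :=
  | XEmpty
  | XEdge of nat & nat
  | XBlock of {set 'I_n}.
Arguments XEmpty {n}.
Arguments XEdge {n}.

Section Psi.
Variables (n : nat) (P : {set {set 'I_(n + n)}}).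

Definition posB (B : {set 'I_(n + n)}) : {set 'I_n} :=
  [set j : 'I_n | lshift n j \in B].

Definition psi_eta : {set {set 'I_n}} := [set posB B | B in P] :\ set0.

Definition psi_X : {set {set 'I_n}} :=
  [set A in psi_eta |
     [exists B in P, (posB B == A) && [exists i in B, n <= (i : nat)]]].

(* X = {A_1,...,A_m} sorted by increasing max; psi_seq`_k = A_(k+1) *)
Definition psi_seq : seq {set 'I_n} :=
  sort (fun A B => maxs A <= maxs B) (enum psi_X).

Definition psi_m : nat := size psi_seq.

Definition psiA (k : nat) : {set 'I_n} := nth set0 psi_seq k.

(* sigma: merge A_i and A_(m+1-i) for i = 1..floor(m/2); the unpaired
   middle block (m odd) is kept.  Taking all k < m is the same, since the
   pairs {k, m-1-k} are symmetric and the middle gives A ∪ A = A. *)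
Definition psi_sigma : {set {set 'I_n}} :=
  (psi_eta :\: psi_X) :|: [set psiA k :|: psiA (psi_m.-1 - k) | k : 'I_psi_m].

Definition psi_x : xdata n :=
  if psi_m == 0 then XEmpty
  else if odd psi_m then XBlock (psiA psi_m./2)
  else XEdge (maxs (psiA (psi_m./2).-1)) (mins (psiA psi_m./2)).

End Psi.

Definition is_edge n (S : {set {set 'I_n}}) (i j : nat) : Prop :=
  i < j /\
  exists2 B, B \in S &
    [/\ exists i' : 'I_n, i' = i :> nat /\ i' \in B,
        exists j' : 'I_n, j' = j :> nat /\ j' \in B
      & forall k : 'I_n, k \in B -> ~ (i < k /\ k < j)].

Definition unique_min_edge_or_empty n (S : {set {set 'I_n}})
    (Q : nat -> nat -> Prop) (x : xdata n) : Prop :=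
  ((~ exists i j, is_edge S i j /\ Q i j) /\ x = XEmpty) \/
  (exists i j, [/\ x = XEdge i j, is_edge S i j, Q i j &
     forall k l, is_edge S k l -> Q k l -> (k, l) <> (i, j) -> j - i < l - k]).

Definition min_edge_or_empty n (S : {set {set 'I_n}})
    (Q : nat -> nat -> Prop) (x : xdata n) : Prop :=
  ((~ exists i j, is_edge S i j /\ Q i j) /\ x = XEmpty) \/
  (exists i j, [/\ x = XEdge i j, is_edge S i j, Q i j &
     forall k l, is_edge S k l -> Q k l -> j - i <= l - k]).

(* Main.v *)
Require Import Defs.
From mathcomp Require Import all_boot all_order.
From mathcomp Require Import zify.
Set Implicit Arguments. Unset Strict Implicit. Unset Printing Implicit Defensive.

Lemma maxs_ub n (B : {set 'I_n}) (x : 'I_n) : x \in B -> x <= maxs B.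
Proof. by move=> h; rewrite /maxs; apply: (leq_bigmax_cond (F := fun i : 'I_n => (i : nat))). Qed.

Lemma maxs_mem n (B : {set 'I_n}) (x : 'I_n) : x \in B -> exists2 y : 'I_n, y \in B & maxs B = y.
Proof.
move=> hx; have : 0 < #|B| by apply/card_gt0P; exists x.
by move/(eq_bigmax_cond (fun i : 'I_n => (i : nat))) => [y hy e]; exists y.
Qed.

Lemma mins_lb n (B : {set 'I_n}) (x : 'I_n) : x \in B -> mins B <= x.
Proof.
move=> h; rewrite /mins -big_filter.
have : x \in [seq i <- index_enum 'I_n | i \in B] by rewrite mem_filter h mem_index_enum.
elim: [seq i <- index_enum 'I_n | i \in B] => // y l IH.
rewrite in_cons big_cons => /orP[/eqP ->|hl]; first exact: geq_minl.
exact: leq_trans (geq_minr _ _) (IH hl).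
Qed.

Lemma mins_mem n (B : {set 'I_n}) (x : 'I_n) : x \in B -> exists2 y : 'I_n, y \in B & mins B = y.
Proof.
move=> hx.
have H : mins B = n \/ exists2 y : 'I_n, y \in B & mins B = y.
  rewrite /mins; elim/big_ind: _ => [|a b ha hb|y hy]; [by left | | by right; exists y].
  have [e|e] : minn a b = a \/ minn a b = b.
    by case: (leqP a b) => h; [left | right]; lia.
  - by rewrite e.
  - by rewrite e.
by case: H => // hn; have := mins_lb hx; rewrite hn; have := ltn_ord x; lia.
Qed.

Lemma decr_fun (g : nat -> nat) m : (forall k, k < m -> g k < m) ->
  (forall k l, k < l -> l < m -> g l < g k) -> forall k, k < m -> g k = m.-1 - k.
Proof.
move=> hlt hdec.
have up : forall k, k < m -> g k + k <= g 0.
  elim=> [|k IH] hk; first by rewrite addn0.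
  have := hdec k k.+1 (ltnSn k) hk; have := IH (ltnW hk); lia.
have lo : forall t, t < m -> t <= g (m.-1 - t).
  elim=> [|t IH] ht //.
  have := hdec (m.-1 - t.+1) (m.-1 - t) ltac:(lia) ltac:(lia); have := IH (ltnW ht); lia.
move=> k hk; have := up k hk; have := hlt 0 ltac:(lia); have := lo (m.-1 - k) ltac:(lia).
have -> : m.-1 - (m.-1 - k) = k by lia.
lia.
Qed.


Section Basic.
Variables (n : nat) (P : {set {set 'I_(n + n)}}).
Hypothesis hP : is_NCB P.

Definition blk u := pblock P u.
Definition sb (u v : 'I_(n + n)) := v \in blk u.

Lemma trivP : trivIset P.
Proof. by case: hP => /and3P[]. Qed.
Lemma covP u : u \in cover P.
Proof. by case: hP => /and3P[/eqP -> _ _]; rewrite inE. Qed.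
Lemma blkP u : blk u \in P.
Proof. exact: pblock_mem (covP u). Qed.
Lemma mem_blk u : u \in blk u.
Proof. by rewrite /blk mem_pblock covP. Qed.
Lemma blk_def B u : B \in P -> u \in B -> blk u = B.
Proof. by move=> HB Hu; apply: def_pblock trivP HB Hu. Qed.
Lemma set0P : set0 \notin P.
Proof. by case: hP => /and3P[]. Qed.

Lemma sbE u v : sb u v = (blk u == blk v).
Proof. by rewrite /sb /blk eq_pblock // ?trivP ?covP. Qed.
Lemma sb_refl u : sb u u.
Proof. exact: mem_blk. Qed.
Lemma sb_sym u v : sb u v -> sb v u.
Proof. by rewrite !sbE eq_sym. Qed.
Lemma sb_trans u v w : sb u v -> sb v w -> sb u w.
Proof. by rewrite !sbE => /eqP -> . Qed.

Lemma sb_nc (u v w x : 'I_(n + n)) : u < v -> v < w -> w < x ->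
  sb u w -> sb v x -> sb u v.
Proof.
move=> h1 h2 h3 h4 h5; rewrite sbE; apply/negPn/negP => hne.
case: hP => _ _ _ /(_ (blk u) (blk v) (blkP u) (blkP v) hne u v w x h1 h2 h3).
by apply; rewrite ?mem_blk //.
Qed.

Lemma negBK (u : 'I_(n + n)) : negB (negB u) = u.
Proof.
apply: val_inj => /=; rewrite /negB_nat.
have := ltn_ord u; case: (ltnP u n) => h1 h2.
  by rewrite ifF ?addnK //; apply/negbTE; rewrite -leqNgt leq_addl.
by rewrite ifT ?subnK //; lia.
Qed.

Lemma negB_inj : injective (@negB n).
Proof. exact: can_inj negBK. Qed.

Lemma blk_neg u : blk (negB u) = [set negB x | x in blk u].
Proof.
case: hP => _ hneg _ _.
by apply: blk_def; [apply: hneg; apply: blkP | apply: imset_f; apply: mem_blk].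
Qed.

Lemma sb_neg u v : sb (negB u) (negB v) = sb u v.
Proof. by rewrite /sb blk_neg mem_imset //; apply: negB_inj. Qed.

Definition pos (i : 'I_n) : 'I_(n + n) := lshift n i.
Definition neg (i : 'I_n) : 'I_(n + n) := rshift n i.

Lemma negB_pos i : negB (pos i) = neg i.
Proof. by apply: val_inj => /=; rewrite /negB_nat ltn_ord addnC. Qed.
Lemma negB_neg i : negB (neg i) = pos i.
Proof.
apply: val_inj => /=; rewrite /negB_nat ifF ?addKn //.
by apply/negbTE; rewrite -leqNgt leq_addr.
Qed.

Lemma pos_or_neg u : (exists i, u = pos i) \/ (exists i, u = neg i).
Proof.
case: (splitP u) => j hj; [left | right]; exists j; exact: val_inj.
Qed.

Definition tl (i j : 'I_n) := sb (pos i) (pos j).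
Definition ap (i j : 'I_n) := sb (pos i) (neg j).

Lemma tl_refl i : tl i i. Proof. exact: sb_refl. Qed.
Lemma tl_sym i j : tl i j -> tl j i. Proof. exact: sb_sym. Qed.
Lemma tl_trans i j k : tl i j -> tl j k -> tl i k. Proof. exact: sb_trans. Qed.
Lemma ap_sym i j : ap i j -> ap j i.
Proof.
by rewrite /ap -sb_neg negB_pos negB_neg => /sb_sym.
Qed.
Lemma tl_ap i j k : tl i j -> ap j k -> ap i k. Proof. exact: sb_trans. Qed.
Lemma ap_tl i j k : ap i j -> tl j k -> ap i k.
Proof.
move=> h1 h2; apply: ap_sym; apply: tl_ap (tl_sym h2) (ap_sym h1).
Qed.
Lemma ap_ap i j k : ap i j -> ap j k -> tl i k.
Proof. move=> h1 h2; apply: sb_trans h1 (sb_sym (ap_sym h2)). Qed.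
Lemma tl_ap_ii i j : tl i j -> ap i j -> ap i i.
Proof. by move=> h1 h2; apply: ap_tl h2 (tl_sym h1). Qed.

Lemma pos_val i : pos i = i :> nat. Proof. by []. Qed.
Lemma neg_val i : neg i = n + i :> nat. Proof. by []. Qed.


Definition cls i := [set j | tl i j].
Definition mixed i := [exists j, ap i j].

Lemma posB_blk i : posB (blk (pos i)) = cls i.
Proof. by apply/setP => j; rewrite !inE. Qed.
Lemma mem_cls i j : (j \in cls i) = tl i j.
Proof. by rewrite inE. Qed.
Lemma cls_eq i j : tl i j -> cls i = cls j.
Proof.
move=> h; apply/setP => k; rewrite !inE; apply/idP/idP => h'.
  exact: tl_trans (tl_sym h) h'.
exact: tl_trans h h'.
Qed.
Lemma mixed_tl i j : tl i j -> mixed i -> mixed j.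
Proof. move=> h /existsP[k hk]; apply/existsP; exists k; exact: tl_ap (tl_sym h) hk. Qed.

Lemma eta_mem S : S \in psi_eta P <-> exists i, S = cls i.
Proof.
rewrite /psi_eta !inE; split.
- case/andP => hS /imsetP[B hB eS]; subst S.
  case/set0Pn: hS => i; rewrite inE => hi.
  by exists i; rewrite -(blk_def hB hi) posB_blk.
- case=> i ->; apply/andP; split.
    by apply/set0Pn; exists i; rewrite inE tl_refl.
  by apply/imsetP; exists (blk (pos i)); [exact: blkP | rewrite posB_blk].
Qed.

Lemma X_mem S : S \in psi_X P <-> exists i, S = cls i /\ mixed i.
Proof.
rewrite /psi_X inE; split.
- case/andP => /eta_mem [i ->] /existsP [B /andP[hB /andP[/eqP hBA /existsP[u /andP[hu hnu]]]]].
  exists i; split => //.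
  have hi : pos i \in B by move: (tl_refl i); rewrite -mem_cls -hBA inE.
  have hB' := blk_def hB hi.
  case: (pos_or_neg u) => [[j hj]|[j hj]].
    by move: hnu; rewrite hj pos_val; have := ltn_ord j; lia.
  by apply/existsP; exists j; rewrite /ap /sb hB' -hj.
- case=> i [-> hm]; apply/andP; split; first by apply/eta_mem; exists i.
  case/existsP: hm => j hj.
  apply/existsP; exists (blk (pos i)); rewrite blkP posB_blk eqxx /=.
  by apply/existsP; exists (neg j); apply/andP; split => //; rewrite neg_val leq_addr.
Qed.

Local Notation s := (psi_seq P).
Local Notation m := (psi_m P).
Local Notation A := (psiA P).

Lemma s_perm : perm_eq s (enum (psi_X P)).
Proof. by rewrite /psi_seq perm_sort perm_refl. Qed.
Lemma s_uniq : uniq s.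
Proof. by rewrite (perm_uniq s_perm) enum_uniq. Qed.
Lemma mem_s S : (S \in s) = (S \in psi_X P).
Proof. by rewrite (perm_mem s_perm) mem_enum. Qed.
Lemma A_X k : k < m -> A k \in psi_X P.
Proof. by move=> hk; rewrite -mem_s; apply: mem_nth. Qed.
Lemma A_cls k : k < m -> exists i, A k = cls i /\ mixed i.
Proof. by move/A_X/X_mem. Qed.
Lemma A_inj k l : k < m -> l < m -> A k = A l -> k = l.
Proof. by move=> hk hl e; apply/eqP; rewrite -(nth_uniq set0 hk hl s_uniq); apply/eqP. Qed.
Lemma A_sorted k l : k < l -> l < m -> maxs (A k) <= maxs (A l).
Proof.
move=> hkl hl.
apply: (sorted_ltn_nth (leT := fun A B : {set 'I_n} => maxs A <= maxs B)) => //.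
- by move=> ? ? ?; apply: leq_trans.
- by apply: sort_sorted => x y; apply: leq_total.
- by rewrite inE; apply: ltn_trans hl.
Qed.

Lemma noint (a b c : 'I_n) : a < b -> b < c -> tl a c -> mixed b -> tl a b.
Proof.
move=> h1 h2 h3 /existsP[d hd].
apply: (sb_nc (w := pos c) (x := neg d)) => //; rewrite ?pos_val ?neg_val //.
by have := ltn_ord c; lia.
Qed.

Lemma sepX i j : mixed i -> mixed j -> ~~ tl i j ->
  (forall x y, x \in cls i -> y \in cls j -> x < y) \/
  (forall x y, x \in cls i -> y \in cls j -> y < x).
Proof.
move=> hi hj hij.
have disj x : x \in cls i -> x \in cls j -> False.
  rewrite !mem_cls => h1 h2; move/negP: hij; apply; exact: tl_trans h1 (tl_sym h2).
have mx i' x : mixed i' -> x \in cls i' -> mixed x.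
  by move=> h; rewrite mem_cls => h'; apply: mixed_tl h' h.
case: (boolP [exists x, exists y, [&& x \in cls i, y \in cls j & y < x]]).
- case/existsP=> x0 /existsP[y0 /and3P[h0 h0' hlt]].
  right => x y hx hy; case: (ltngtP x y) => // hxy; exfalso.
  + case: (ltngtP x y0) => h.
    * have : tl x y0 by apply: noint h hlt _ (mx _ _ hj h0');
        move: hx h0; rewrite !mem_cls => a1 a2; exact: tl_trans (tl_sym a1) a2.
      move=> e; apply: (disj y0) => //; move: hx; rewrite !mem_cls => a1; exact: tl_trans a1 e.
    * have : tl y0 x by apply: noint h hxy _ (mx _ _ hi hx);
        move: hy h0'; rewrite !mem_cls => a1 a2; exact: tl_trans (tl_sym a2) a1.
      move=> e; apply: (disj x) => //; move: h0'; rewrite !mem_cls => a1; exact: tl_trans a1 e.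
    * by apply: (disj x) => //; rewrite (val_inj h).
  + by apply: (disj x) => //; rewrite (val_inj hxy).
- move=> hno; left => x y hx hy; case: (ltngtP x y) => // h; exfalso.
  + by move/negP: hno; apply; apply/existsP; exists x; apply/existsP; exists y; rewrite hx hy h.
  + by apply: (disj x) => //; rewrite (val_inj h).
Qed.

Lemma A_lt k l x y : k < l -> l < m -> x \in A k -> y \in A l -> x < y.
Proof.
move=> hkl hl hx hy.
have hk : k < m by apply: ltn_trans hl.
case: (A_cls hk) => i [ei hi]; case: (A_cls hl) => j [ej hj].
have nij : ~~ tl i j.
  apply/negP => h; have := A_inj hk hl; rewrite ei ej (cls_eq h) => /(_ erefl) e.
  by move: hkl; rewrite e ltnn.
case: (sepX hi hj nij) => [H|H]; first by apply: H; rewrite -?ei -?ej.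
exfalso; case: (maxs_mem hy) => y1 hy1 e1.
case: (maxs_mem hx) => x1 hx1 e2.
have := A_sorted hkl hl; rewrite e1 e2.
have := H x1 y1; rewrite -ei -ej => /(_ hx1 hy1); lia.
Qed.

Lemma A_disj k l x : k < m -> l < m -> x \in A k -> x \in A l -> k = l.
Proof.
move=> hk hl h1 h2; case: (ltngtP k l) => // h.
  by have := A_lt h hl h1 h2; rewrite ltnn.
by have := A_lt h hk h2 h1; rewrite ltnn.
Qed.

Lemma A_elt k x : k < m -> x \in A k -> A k = cls x.
Proof. move=> hk; case: (A_cls hk) => i [-> _]; rewrite mem_cls; exact: cls_eq. Qed.
Lemma A_mixed k x : k < m -> x \in A k -> mixed x.
Proof. move=> hk; case: (A_cls hk) => i [-> hi]; rewrite mem_cls => h; exact: mixed_tl h hi. Qed.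
Lemma A_nonempty k : k < m -> exists x, x \in A k.
Proof. by move=> hk; case: (A_cls hk) => i [-> _]; exists i; rewrite mem_cls tl_refl. Qed.

Lemma mixed_idx i : mixed i -> exists2 k, k < m & i \in A k.
Proof.
move=> hi; have hX : cls i \in psi_X P by apply/X_mem; exists i.
rewrite -mem_s in hX; exists (index (cls i) s); first by rewrite index_mem.
by rewrite /psiA nth_index // mem_cls tl_refl.
Qed.

Definition pk k : option 'I_n := [pick x in A k].
Definition partner k := if pk k is Some x then [set j | ap x j] else set0.

Lemma partner_ok k x : x \in A k -> partner k = [set j | ap x j].
Proof.
move=> hx; rewrite /partner /pk; case: pickP => [y hy | h]; last by move: (h x); rewrite hx.
have hk : k < m.
  by rewrite ltnNge; apply/negP => h; move: hx; rewrite /psiA nth_default // inE.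
have e : tl y x by move: hy; rewrite (A_elt hk hx) mem_cls => h; exact: tl_sym.
apply/setP => j; rewrite !inE; apply/idP/idP => h.
  exact: tl_ap (tl_sym e) h.
exact: tl_ap e h.
Qed.

Lemma partner_X k : k < m -> partner k \in psi_X P.
Proof.
move=> hk; case: (A_cls hk) => i [ei hi].
have hiA : i \in A k by rewrite ei mem_cls tl_refl.
rewrite (partner_ok hiA); case/existsP: (hi) => j0 h0.
apply/X_mem; exists j0; split.
  apply/setP => j; rewrite !inE; apply/idP/idP => h.
    exact: ap_ap (ap_sym h0) h.
  exact: ap_tl h0 h.
by apply/existsP; exists i; apply: ap_sym.
Qed.

Definition fidx k := index (partner k) s.
Lemma fidx_lt k : k < m -> fidx k < m.
Proof. by move=> hk; rewrite /fidx index_mem mem_s partner_X. Qed.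
Lemma A_f k : k < m -> A (fidx k) = partner k.
Proof. by move=> hk; rewrite /psiA /fidx nth_index // mem_s partner_X. Qed.

Lemma partner_lt k l y z : k < l -> l < m -> y \in partner l -> z \in partner k -> y < z.
Proof.
move=> hkl hl hy hz.
have hk : k < m by apply: ltn_trans hl.
case: (A_nonempty hk) => x hx; case: (A_nonempty hl) => x' hx'.
rewrite (partner_ok hx) inE in hz; rewrite (partner_ok hx') inE in hy.
have hxx := A_lt hkl hl hx hx'.
have bad : tl x x' -> False.
  move=> e; have : x' \in A k by rewrite (A_elt hk hx) mem_cls.
  by move=> h; have := A_lt hkl hl h hx'; rewrite ltnn.
case: (ltngtP y z) => // h; exfalso; apply: bad.
  apply: (sb_nc (w := neg z) (x := neg y)) => //; rewrite ?pos_val ?neg_val //.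
    by have := ltn_ord x'; lia.
  by lia.
by rewrite (val_inj h) in hy; exact: ap_ap hz (ap_sym hy).
Qed.

Lemma fidx_decr k l : k < l -> l < m -> fidx l < fidx k.
Proof.
move=> hkl hl; have hk : k < m by apply: ltn_trans hl.
case: (A_nonempty (fidx_lt hl)) => y; rewrite A_f // => hy.
case: (A_nonempty (fidx_lt hk)) => z; rewrite A_f // => hz.
have := partner_lt hkl hl hy hz => hyz.
case: (ltngtP (fidx l) (fidx k)) => // h; exfalso.
  have := A_lt h (fidx_lt hl); rewrite !A_f // => /(_ _ _ hz hy); lia.
have e : partner l = partner k by rewrite -!A_f // h.
have hz2 : z \in partner l by rewrite e.
by have := partner_lt hkl hl hz2 hz; rewrite ltnn.
Qed.

Lemma fidx_eq k : k < m -> fidx k = m.-1 - k.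
Proof.
move=> hk; apply: (@decr_fun fidx m) => //; first exact: fidx_lt.
by move=> ? ?; exact: fidx_decr.
Qed.

Lemma pairing k x j : k < m -> x \in A k -> ap x j = (j \in A (m.-1 - k)).
Proof. by move=> hk hx; rewrite -fidx_eq // A_f // (partner_ok hx) inE. Qed.

Definition sg i j := tl i j || ap i j.
Definition scls i := [set j | sg i j].

Lemma mem_scls i j : (j \in scls i) = sg i j.
Proof. by rewrite inE. Qed.
Lemma sg_refl i : sg i i.
Proof. by rewrite /sg tl_refl. Qed.
Lemma sg_sym i j : sg i j -> sg j i.
Proof. by case/orP => h; apply/orP; [left; exact: tl_sym | right; exact: ap_sym]. Qed.
Lemma sg_trans i j k : sg i j -> sg j k -> sg i k.
Proof.
case/orP=> h1 /orP[h2|h2]; apply/orP.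
- by left; exact: tl_trans h1 h2.
- by right; exact: tl_ap h1 h2.
- by right; exact: ap_tl h1 h2.
- by left; exact: ap_ap h1 h2.
Qed.

Lemma sg_nc (a b c d : 'I_n) : a < b -> b < c -> c < d -> sg a c -> sg b d -> sg a b.
Proof.
move=> h1 h2 h3 /orP[e1|e1] /orP[e2|e2]; apply/orP.
- by left; apply: (sb_nc (w := pos c) (x := pos d)).
- left; apply: (sb_nc (w := pos c) (x := neg d)); rewrite ?pos_val ?neg_val //.
  all: try (move: (ltn_ord a) (ltn_ord b) (ltn_ord c) (ltn_ord d); lia).
- right; apply: (sb_nc (v := neg b) (w := neg c) (x := neg d)); rewrite ?pos_val ?neg_val //.
  all: try (move: (ltn_ord a) (ltn_ord b) (ltn_ord c) (ltn_ord d); lia).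
  by rewrite -!negB_pos sb_neg.
- left; apply: (sb_nc (w := neg c) (x := neg d)); rewrite ?pos_val ?neg_val //.
  all: try (move: (ltn_ord a) (ltn_ord b) (ltn_ord c) (ltn_ord d); lia).
Qed.

Lemma sig_blk S i : S \in psi_sigma P -> i \in S -> S = scls i.
Proof.
rewrite /psi_sigma inE => /orP[].
- rewrite inE => /andP[hX /eta_mem[x ex]]; subst S => hi.
  have tx : tl x i by rewrite -mem_cls.
  have nm : ~~ mixed i.
    apply/negP => hm; move/negP: hX; apply; apply/X_mem; exists i; split => //; exact: cls_eq.
  apply/setP => j; rewrite !inE /sg.
  have -> : ap i j = false.
    by apply/negbTE/negP => h; move/negP: nm; apply; apply/existsP; exists j.
  rewrite orbF; apply/idP/idP => h; [exact: tl_trans (tl_sym tx) h | exact: tl_trans tx h].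
- case/imsetP => k _ ek; subst S => hi.
  have hk := ltn_ord k.
  have hk' : m.-1 - k < m by lia.
  case/setUP: hi => hi.
  + apply/setP => j; rewrite !inE /sg -(pairing _ hk hi) (A_elt hk hi) mem_cls //.
  + have hkk : m.-1 - (m.-1 - k) = k by lia.
    apply/setP => j; rewrite !inE /sg orbC.
    have := pairing j hk' hi; rewrite hkk => <-.
    by rewrite (A_elt hk' hi) mem_cls.
Qed.

Lemma scls_sig i : scls i \in psi_sigma P.
Proof.
case: (boolP (mixed i)) => hm.
- case: (mixed_idx hm) => k hk hi.
  have hT : A k :|: A (m.-1 - k) \in psi_sigma P.
    by rewrite /psi_sigma inE; apply/orP; right; apply/imsetP; exists (Ordinal hk).
  have hiT : i \in A k :|: A (m.-1 - k) by rewrite inE hi.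
  by rewrite -(sig_blk hT hiT).
- have hT : cls i \in psi_sigma P.
    rewrite /psi_sigma inE; apply/orP; left; rewrite inE; apply/andP; split.
      apply/negP => /X_mem [x [e hx]].
      have : tl x i by rewrite -mem_cls -e mem_cls tl_refl.
      by move=> h; move/negP: hm; apply; exact: mixed_tl h hx.
    by apply/eta_mem; exists i.
  have hiT : i \in cls i by rewrite mem_cls tl_refl.
  by rewrite -(sig_blk hT hiT).
Qed.

Definition redge (i j : 'I_n) :=
  [/\ i < j, sg i j & forall k : 'I_n, sg i k -> ~ (i < k /\ k < j)].

Lemma is_edgeE a b : is_edge (psi_sigma P) a b <->
  exists i j : 'I_n, [/\ a = i, b = j & redge i j].
Proof.
split.
- case=> hab [B hB [[i [ei hi]] [j [ej hj]] hno]].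
  exists i, j; split => //.
  have eB := sig_blk hB hi.
  split; [by rewrite ei ej | by rewrite -mem_scls -eB |].
  by move=> k hk; rewrite ei ej; apply: hno; rewrite eB mem_scls.
- case=> i [j [-> -> [hij hsg hno]]].
  split => //; exists (scls i); first exact: scls_sig.
  split; [by exists i; rewrite mem_scls sg_refl | by exists j; rewrite mem_scls |].
  by move=> k; rewrite mem_scls; apply: hno.
Qed.

Lemma ap_ii i : ap i i -> odd m /\ i \in A m./2.
Proof.
move=> h; have hm : mixed i by apply/existsP; exists i.
case: (mixed_idx hm) => k hk hi.
have hk' : m.-1 - k < m by lia.
have hi' : i \in A (m.-1 - k) by rewrite -(pairing _ hk hi).
have e := A_disj hk hk' hi hi'.
have em : m = (odd true + k.*2) by rewrite /= -addnn; lia.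
have hk2 : m./2 = k by rewrite em half_bit_double.
have ho : odd m by rewrite em oddD odd_double.
by split => //; rewrite hk2.
Qed.

Lemma odd_Z i : odd m -> (i \in A m./2) = ap i i.
Proof.
move=> ho; apply/idP/idP => h; last by case: (ap_ii h).
move: (odd_double_half m); rewrite ho /= -addnn => e2.
have hc : m./2 < m by lia.
rewrite (pairing _ hc h).
by have -> : m.-1 - m./2 = m./2 by lia.
Qed.

Lemma le_maxs k l x : k <= l -> l < m -> x \in A k -> x <= maxs (A l).
Proof.
move=> hkl hl hx; case: (ltngtP k l) hkl => // h _.
  case: (A_nonempty hl) => y0 hy0; case: (maxs_mem hy0) => y hy ->.
  exact: ltnW (A_lt h hl hx hy).
by rewrite -h; exact: maxs_ub.
Qed.
Lemma mins_le k l x : l <= k -> k < m -> x \in A k -> mins (A l) <= x.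
Proof.
move=> hkl hk hx; case: (ltngtP l k) hkl => // h _.
  have hl : l < m by apply: ltn_trans hk.
  case: (A_nonempty hl) => y0 hy0; case: (mins_mem hy0) => y hy ->.
  exact: ltnW (A_lt h hk hy hx).
by rewrite h; exact: mins_lb.
Qed.
Lemma lt_mins k l x : k < l -> l < m -> x \in A k -> x < mins (A l).
Proof.
move=> h hl hx; case: (A_nonempty hl) => y0 hy0; case: (mins_mem hy0) => y hy ->.
exact: A_lt h hl hx hy.
Qed.
Lemma maxs_lt k l x : l < k -> k < m -> x \in A k -> maxs (A l) < x.
Proof.
move=> h hk hx; have hl : l < m by apply: ltn_trans hk.
case: (A_nonempty hl) => y0 hy0; case: (maxs_mem hy0) => y hy ->.
exact: A_lt h hk hy hx.
Qed.

Inductive xspec : xdata n -> Prop :=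
| XS0 : (forall i j, ~~ ap i j) -> xspec XEmpty
| XS2 (a b : 'I_n) : redge a b -> ap a b -> (forall i, ~~ ap i i) ->
    (forall i j, ap i j -> i <= j -> i <= a /\ b <= j) ->
    (forall i j, sg i j -> i <= a -> b <= j -> ap i j) -> xspec (XEdge a b)
| XS1 (Z : {set 'I_n}) : Z \in psi_sigma P -> (forall i, (i \in Z) = ap i i) ->
    (exists z, z \in Z) ->
    (forall i j, ap i j -> i <= j -> (i \in Z /\ j \in Z) \/ (i < mins Z /\ maxs Z < j)) ->
    (forall i j, sg i j -> i < mins Z -> maxs Z < j -> ap i j) -> xspec (XBlock Z).

Lemma xspecP : xspec (psi_x P).
Proof.
rewrite /psi_x; case: eqP => hm0.
  apply: XS0 => i j; apply/negP => h.
  have hmx : mixed i by apply/existsP; exists j.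
  by case: (mixed_idx hmx) => k; rewrite hm0.
have e2 := odd_double_half m.
case: ifP => ho.
- move: e2; rewrite ho /= -addnn => e2.
  have hc : m./2 < m by lia.
  have hmc : m.-1 - m./2 = m./2 by lia.
  apply: XS1.
  + rewrite /psi_sigma inE; apply/orP; right; apply/imsetP; exists (Ordinal hc) => //=.
    by rewrite hmc setUid.
  + move=> i; exact: odd_Z.
  + exact: A_nonempty hc.
  + move=> i j hij hle.
    have hmi : mixed i by apply/existsP; exists j.
    case: (mixed_idx hmi) => k hk hi.
    have hk' : m.-1 - k < m by lia.
    have hj : j \in A (m.-1 - k) by rewrite -(pairing _ hk hi).
    case: (ltngtP k m./2) => hkc.
    * right; split; first exact: lt_mins hkc hc hi.
      by apply: maxs_lt _ hk' hj; lia.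
    * exfalso.
      have h1 : j < mins (A m./2) by apply: lt_mins _ hc hj; lia.
      have h2 : maxs (A m./2) < i by apply: maxs_lt hkc hk hi.
      case: (A_nonempty hc) => z hz.
      have := mins_lb hz; have := maxs_ub hz; lia.
    * by left; split; [rewrite -hkc | rewrite hkc hmc in hj].
  + move=> i j hsg hi hj.
    case/orP: hsg => // htl; exfalso.
    case: (A_nonempty hc) => z0 hz0; case: (mins_mem hz0) => z hz ez.
    have hzz : ap z z by rewrite -odd_Z.
    have hzj : z < j by have := maxs_ub hz; lia.
    have tiz : tl i z.
      apply: (sb_nc (w := pos j) (x := neg z)) => //; rewrite ?pos_val ?neg_val; try lia.
      by have := ltn_ord j; lia.
    have : i \in A m./2 by rewrite (A_elt hc hz) mem_cls; exact: tl_sym.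
    by move/mins_lb; lia.
- move: e2; rewrite ho /= -addnn add0n => e2.
  have hcm : m./2 < m by lia.
  have hmc : m.-1 - (m./2).-1 = m./2 by lia.
  have hc' : (m./2).-1 < m by lia.
  have hcc : (m./2).-1 < m./2 by lia.
  case: (A_nonempty hc') => a0 ha0; case: (maxs_mem ha0) => a ha ea.
  case: (A_nonempty hcm) => b0 hb0; case: (mins_mem hb0) => b hb eb.
  rewrite ea eb.
  have hab : a < b := A_lt hcc hcm ha hb.
  have apab : ap a b by rewrite (pairing _ hc' ha) hmc.
  apply: XS2 => //.
  + split => //; first by apply/orP; right.
    move=> k /orP[h|h] [h1 h2].
      have : k \in A (m./2).-1 by rewrite (A_elt hc' ha) mem_cls.
      by move/maxs_ub; rewrite ea; lia.
    have : k \in A m./2 by rewrite -hmc -(pairing _ hc' ha).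
    by move/mins_lb; rewrite eb; lia.
  + by move=> i; apply/negP => /ap_ii []; rewrite ho.
  + move=> i j hij hle.
    have hmi : mixed i by apply/existsP; exists j.
    case: (mixed_idx hmi) => k hk hi.
    have hk' : m.-1 - k < m by lia.
    have hj : j \in A (m.-1 - k) by rewrite -(pairing _ hk hi).
    case: (leqP k (m./2).-1) => hkc.
    * split; first by rewrite -ea; exact: le_maxs hkc hc' hi.
      by rewrite -eb; apply: mins_le _ hk' hj; lia.
    * exfalso.
      have h1 : j <= a by rewrite -ea; apply: le_maxs _ hc' hj; lia.
      have h2 : b <= i by rewrite -eb; apply: mins_le _ hk hi; lia.
      lia.
  + move=> i j hsg hia hbj.
    case/orP: hsg => // htl; exfalso.
    have tia : tl i a.
      case: (ltngtP i a) => h; last by rewrite (val_inj h) tl_refl.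
        apply: (sb_nc (w := pos j) (x := neg b)) => //; rewrite ?pos_val ?neg_val; try lia.
        by have := ltn_ord j; lia.
      lia.
    have : j \in A (m./2).-1.
      by rewrite (A_elt hc' ha) mem_cls; exact: tl_trans (tl_sym tia) htl.
    by move/maxs_ub; rewrite ea; lia.
Qed.

Lemma Zblk Z z w : Z \in psi_sigma P -> z \in Z -> (w \in Z) = sg z w.
Proof. by move=> hZ hz; rewrite (sig_blk hZ hz) mem_scls. Qed.

Lemma Zboth Z i j : Z \in psi_sigma P -> (forall x, (x \in Z) = ap x x) ->
  i \in Z -> j \in Z -> tl i j /\ ap i j.
Proof.
move=> hZ eZ hi hj.
have hs : sg i j by rewrite -(Zblk _ hZ hi).
have aii : ap i i by rewrite -eZ.
have ajj : ap j j by rewrite -eZ.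
case/orP: hs => h; split => //; [exact: tl_ap h ajj | exact: ap_ap h ajj].
Qed.

Lemma Zsep Z i t : Z \in psi_sigma P -> sg i t -> i < mins Z ->
  t < mins Z \/ maxs Z < t.
Proof.
move=> hZ hit him.
case: (ltnP t (mins Z)) => h1; first by left.
case: (ltnP (maxs Z) t) => h2; first by right.
exfalso.
case: (set_0Vmem Z) => [e|[z0 hz0]].
  by move: h1; rewrite e /mins big_set0; have := ltn_ord t; lia.
case: (mins_mem hz0) => zm hzm ezm; case: (maxs_mem hz0) => zM hzM ezM.
have iZ : i \in Z -> False by move/mins_lb; lia.
case: (boolP (t \in Z)) => ht.
  by apply: iZ; rewrite (Zblk _ hZ ht); apply: sg_sym.
have h1' : zm < t.
  rewrite ltn_neqAle -ezm h1 andbT; apply/negP => /eqP e.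
  have e' : zm = t by apply: val_inj; rewrite /= -ezm e.
  by move: ht; rewrite -e' hzm.
have h2' : t < zM.
  rewrite ltn_neqAle -ezM h2 andbT; apply/negP => /eqP e.
  have e' : t = zM by apply: val_inj; rewrite /= e ezM.
  by move: ht; rewrite e' hzM.
apply: iZ; rewrite (Zblk _ hZ hzm); apply: sg_sym.
apply: (sg_nc (c := t) (d := zM)) => //; first lia.
by rewrite -(Zblk _ hZ hzm).
Qed.

Lemma Zencl Z z i j : Z \in psi_sigma P -> z \in Z -> sg i j -> i < z -> z < j ->
  ~~ sg i z -> i < mins Z /\ maxs Z < j.
Proof.
move=> hZ hz hij hiz hzj niz.
have W : forall w, w \in Z -> i < w /\ w < j.
  move=> w; rewrite (Zblk _ hZ hz) => hzw.
  case: (ltngtP w i) => h.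
  - exfalso; move/negP: niz; apply.
    have swi : sg w i by apply: (sg_nc (c := z) (d := j)) => //; exact: sg_sym.
    exact: sg_trans (sg_sym swi) (sg_sym hzw).
  - case: (ltngtP w j) => h'; [by [] | exfalso | exfalso]; move/negP: niz; apply.
      by apply: (sg_nc (c := j) (d := w)) => //.
    by rewrite (val_inj h') in hzw; exact: sg_trans hij (sg_sym hzw).
  - by exfalso; move/negP: niz; apply; rewrite (val_inj h) in hzw; exact: sg_sym.
case: (mins_mem hz) => y hy ->; case: (maxs_mem hz) => y' hy' ->.
by split; [exact: (W y hy).1 | exact: (W y' hy').2].
Qed.

Lemma edge_sep (a b i t : 'I_n) : redge a b -> sg i t -> i <= a -> t <= a \/ b <= t.
Proof.
case=> hab sab hno hit hia.
case: (leqP t a) => h1; first by left.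
case: (leqP b t) => h2; first by right.
exfalso; apply: (hno t); last by [].
case: (ltngtP i a) => h.
- have sia : sg i a by apply: (sg_nc (c := t) (d := b)).
  exact: sg_trans (sg_sym sia) hit.
- lia.
- by rewrite -(val_inj h).
Qed.

Lemma span_edge (i j : 'I_n) (a b : nat) : sg i j -> i <= a -> a < b -> b <= j ->
  (forall t, sg i t -> t <= a \/ b <= t) ->
  exists k l, [/\ redge k l, i <= k, k <= a, b <= l & l <= j].
Proof.
move=> hij hia hab hbj hsep.
have hi0 : (fun t : 'I_n => sg i t && (t <= a)) i by rewrite /= sg_refl hia.
case: (@arg_maxnP _ i (fun t : 'I_n => sg i t && (t <= a)) (fun t : 'I_n => (t : nat)) hi0) => k /andP[hk1 hk2] kmax.
have hj0 : (fun t : 'I_n => sg i t && (b <= t)) j by rewrite /= hij hbj.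
case: (@arg_minnP _ j (fun t : 'I_n => sg i t && (b <= t)) (fun t : 'I_n => (t : nat)) hj0) => l /andP[hl1 hl2] lmin.
exists k, l; split => //.
- split; first lia.
    exact: sg_trans (sg_sym hk1) hl1.
  move=> t hkt [h1 h2].
  have hit : sg i t := sg_trans hk1 hkt.
  case: (hsep t hit) => h.
    by have := kmax t; rewrite hit h => /(_ isT); lia.
  by have := lmin t; rewrite hit h => /(_ isT); lia.
- by have := kmax i; rewrite sg_refl hia => /(_ isT).
- by have := lmin j; rewrite hij hbj => /(_ isT).
Qed.

Lemma nest1 (k l k' l' : 'I_n) : redge k l -> redge k' l' -> k <= k' -> k' < l -> l' <= l.
Proof.
case=> hkl skl nkl [hkl' skl' nkl'] hkk hkl2.
case: (leqP l' l) => // hll; exfalso.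
case: (ltngtP k k') hkk => // h _.
  apply: (nkl k'); last by [].
  by apply: (sg_nc (c := l) (d := l')).
apply: (nkl' l); last lia.
by rewrite -(val_inj h).
Qed.

Lemma nested (k l k' l' : 'I_n) : redge k l -> redge k' l' -> k < l' -> k' < l ->
  (k <= k' /\ l' <= l) \/ (k' <= k /\ l <= l').
Proof.
move=> e1 e2 h1 h2; case: (leqP k k') => h.
  by left; split => //; exact: nest1 e1 e2 h h2.
by right; split; [exact: ltnW | exact: nest1 e2 e1 (ltnW h) h1].
Qed.

End Basic.


Ltac slia := repeat match goal with
  | H : is_true (sg _ _ _) |- _ => clear H
  | H : is_true (tl _ _ _) |- _ => clear H
  | H : is_true (ap _ _ _) |- _ => clear H
  | H : is_true (~~ ?b) |- _ => lazymatch b with @eq_op _ _ _ => fail | _ => clear H end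
  | H : is_true (_ \in _) |- _ => clear H
  | H : is_true (_ \subset _) |- _ => clear H
  | H : redge _ _ _ |- _ => clear H
  | H : forall _ : ?A, ?B |- _ => lazymatch B with False => fail | _ => clear H end
  | H : _ <-> _ |- _ => clear H
  | H : exists _, _ |- _ => clear H
  | H : _ \/ _ |- _ => clear H
  | H : @eq (xdata _) _ _ |- _ => clear H
  | H : is_NCB _ |- _ => clear H
  end; lia.

Section Two.
Variables (n : nat) (P1 P2 : {set {set 'I_(n + n)}}).
Hypotheses (h1 : is_NCB P1) (h2 : is_NCB P2).

Lemma refinesE : refines P1 P2 <->
  forall i j, (tl P1 i j -> tl P2 i j) /\ (ap P1 i j -> ap P2 i j).
Proof.
split.
- move=> hr i j.
  case: (hr _ (blkP h1 (pos i))) => C hC sub.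
  have e : blk P2 (pos i) = C.
    by apply: (blk_def h2 hC); apply: (subsetP sub); apply: mem_blk.
  by split => h; rewrite /tl /ap /sb e; apply: (subsetP sub).
- move=> H.
  have Hsb : forall u v, sb P1 u v -> sb P2 u v.
    move=> u v; case: (pos_or_neg u) => [[i ->]|[i ->]]; case: (pos_or_neg v) => [[j ->]|[j ->]].
    + exact: (H i j).1.
    + exact: (H i j).2.
    + move=> h; apply: (sb_sym h2); apply: (H j i).2; exact: (sb_sym h1 h).
    + rewrite -(negB_pos i) -(negB_pos j) (sb_neg h1) (sb_neg h2); exact: (H i j).1.
  move=> B hB.
  have : B != set0 by apply/negP => /eqP e; move: (set0P h1); rewrite -e hB.
  case/set0Pn => u hu.
  exists (blk P2 u); first exact: blkP.
  apply/subsetP => v hv; apply: Hsb.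
  by rewrite /sb (blk_def h1 hB hu).
Qed.

Lemma sig_refinesE (npos : 0 < n) : refines (psi_sigma P1) (psi_sigma P2) <->
  forall i j, sg P1 i j -> sg P2 i j.
Proof.
split.
- move=> hr i j hij; case: (hr _ (scls_sig h1 i)) => T hT sub.
  have hiT : i \in T by apply: (subsetP sub); rewrite mem_scls sg_refl.
  have hjT : j \in T by apply: (subsetP sub); rewrite mem_scls.
  by rewrite -mem_scls -(sig_blk h2 hT hiT).
- move=> H S hS; case: (set_0Vmem S) => [->|[i hi]].
    by exists (scls P2 (Ordinal npos)); [exact: scls_sig | exact: sub0set].
  exists (scls P2 i); first exact: scls_sig.
  by rewrite (sig_blk h1 hS hi); apply/subsetP => j; rewrite !mem_scls; exact: H.
Qed.

Hypothesis Hsg : forall i j, sg P1 i j -> sg P2 i j.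

Lemma Espan (a b i j : 'I_n) : redge P2 a b -> sg P1 i j -> i <= a -> b <= j ->
  exists k l, [/\ redge P1 k l, i <= k, k <= a, b <= l & l <= j].
Proof.
move=> re hij hia hbj; case: (re) => hab _ _.
apply: (span_edge h1 hij hia hab hbj) => t ht.
exact: (edge_sep h2 re (Hsg ht) hia).
Qed.

Lemma Zspan Z (i j : 'I_n) : Z \in psi_sigma P2 -> (exists z, z \in Z) ->
  sg P1 i j -> i < mins Z -> maxs Z < j ->
  exists k l, [/\ redge P1 k l, i <= k, k < mins Z, maxs Z < l & l <= j].
Proof.
move=> hZ [z hz] hij hi hj.
have := mins_lb hz; have := maxs_ub hz => hz1 hz2.
have [k [l [r1 r2 r3 r4 r5]]] : exists k l, [/\ redge P1 k l, i <= k, k <= (mins Z).-1,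
    (maxs Z).+1 <= l & l <= j].
  apply: (span_edge h1 hij) => //; try lia.
  move=> t ht; case: (Zsep h2 hZ (Hsg ht) hi) => h; [left | right]; lia.
by exists k, l; split => //; lia.
Qed.

End Two.

Ltac kill := unfold unique_min_edge_or_empty, min_edge_or_empty in *;
  repeat match goal with
  | H : _ \/ _ |- _ => destruct H as [H|H]
  | H : _ /\ _ |- _ => let H1 := fresh "K" in destruct H as [H1 H]
  | H : and4 _ _ _ _ |- _ =>
      let a := fresh "K" in let b := fresh "K" in let c := fresh "K" in destruct H as [a b c H]
  | H : exists _, _ |- _ => let x := fresh "x" in destruct H as [x H]
  | H : _ = _ |- _ => solve [discriminate H]
  end.

Theorem proposition3p4 (n : nat) (npos : 0 < n)
    (pi1 pi2 : {set {set 'I_(n + n)}}) :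
  is_NCB pi1 -> is_NCB pi2 ->
  (refines pi1 pi2 <->
   refines (psi_sigma pi1) (psi_sigma pi2) /\
   ( (* (1) *)
     (psi_x pi1 = XEmpty /\ psi_x pi2 = XEmpty)
   \/ (* (2) *)
     (exists a b, psi_x pi2 = XEdge a b /\ is_edge (psi_sigma pi2) a b /\
        unique_min_edge_or_empty (psi_sigma pi1)
          (fun i j => i <= a /\ b <= j) (psi_x pi1))
   \/ (* (3) *)
     (exists B2 B1, psi_x pi2 = XBlock B2 /\ B2 \in psi_sigma pi2 /\
        psi_x pi1 = XBlock B1 /\ B1 \in psi_sigma pi1 /\ B1 \subset B2)
   \/ (* (4) *)
     (exists B2 i j, psi_x pi2 = XBlock B2 /\ B2 \in psi_sigma pi2 /\
        psi_x pi1 = XEdge i j /\ is_edge (psi_sigma pi1) i j /\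
        exists i' j' : 'I_n, i' = i :> nat /\ j' = j :> nat /\
                             i' \in B2 /\ j' \in B2)
   \/ (* (5) *)
     (exists B2, psi_x pi2 = XBlock B2 /\ B2 \in psi_sigma pi2 /\
        min_edge_or_empty (psi_sigma pi1)
          (fun i j => i < mins B2 /\ maxs B2 < j) (psi_x pi1)))).
Proof.
move=> h1 h2.
apply: iff_trans (refinesE h1 h2) _.
have SE := sig_refinesE h1 h2 npos.
split.
- move=> H.
  have Hsg : forall i j, sg pi1 i j -> sg pi2 i j.
    move=> i j /orP[h|h]; apply/orP; [left; exact: (H i j).1 h | right; exact: (H i j).2 h].
  split; first by apply/SE.
  case: (xspecP h2) => [N2 | a b re2 apab2 nz2 E3b E4b | Z2 hZ2 eZ2 neZ2 O3b O4b];
  case: (xspecP h1) => [N1 | a1 b1 re1 apab1 nz1 E3a E4a | Z1 hZ1 eZ1 neZ1 O3a O4a].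
  + by left.
  + by have := (H a1 b1).2 apab1; rewrite (negbTE (N2 a1 b1)).
  + case: neZ1 => z hz; have hzz : ap pi1 z z by rewrite -eZ1.
    by have := (H z z).2 hzz; rewrite (negbTE (N2 z z)).
  + right; left; exists a, b; split => //; split; first by apply/(is_edgeE h2); exists a, b.
    left; split => //.
    case=> i [j [/(is_edgeE h1) [i' [j' [-> -> re]]] [hia hbj]]].
    case: re => hij sij _.
    have t1 : tl pi1 i' j' by case/orP: sij => // hh; move: (N1 i' j'); rewrite hh.
    have ap2 := E4b _ _ (Hsg _ _ sij) hia hbj.
    by move: (nz2 i'); rewrite (tl_ap_ii h2 ((H _ _).1 t1) ap2).
  + right; left; exists a, b; split => //; split; first by apply/(is_edgeE h2); exists a, b.
    right; exists a1, b1; split => //.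
    * by apply/(is_edgeE h1); exists a1, b1.
    * by apply: E3b; [exact: (H _ _).2 apab1 | case: re1 => /ltnW].
    * move=> k l /(is_edgeE h1) [k' [l' [-> -> re]]] [hka hbl] hne.
      case: (re) => hkl skl _; case: (re1) => hab1 _ _.
      have ap2 := E4b _ _ (Hsg _ _ skl) hka hbl.
      have ntl1 : ~~ tl pi1 k' l'.
        by apply/negP => t1; move: (nz2 k'); rewrite (tl_ap_ii h2 ((H _ _).1 t1) ap2).
      have ap1 : ap pi1 k' l' by case/orP: skl => // t1; rewrite t1 in ntl1.
      case: (E3a _ _ ap1 (ltnW hkl)) => hk hl.
      case: (eqVneq (k' : nat) a1) => e1; case: (eqVneq (l' : nat) b1) => e2;
        [by rewrite e1 e2 in hne | slia | slia | slia].
  + case: neZ1 => z hz; have hzz : ap pi1 z z by rewrite -eZ1.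
    by move: (nz2 z); rewrite ((H z z).2 hzz).
  + right; right; right; right; exists Z2; split => //; split => //.
    left; split => //.
    case=> i [j [/(is_edgeE h1) [i' [j' [-> -> re]]] [hi hj]]].
    case: re => hij sij _.
    have t1 : tl pi1 i' j' by case/orP: sij => // hh; move: (N1 i' j'); rewrite hh.
    have ap2 := O4b _ _ (Hsg _ _ sij) hi hj.
    have : i' \in Z2 by rewrite eZ2; exact: (tl_ap_ii h2 ((H _ _).1 t1) ap2).
    by move/mins_lb; slia.
  + have ap2 := (H _ _).2 apab1.
    case: (re1) => hab1 _ _.
    case: (O3b _ _ ap2 (ltnW hab1)) => [[ha hb] | [ha hb]].
    * right; right; right; left; exists Z2, a1, b1.
      split => //; split => //; split => //; split; first by apply/(is_edgeE h1); exists a1, b1.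
      by exists a1, b1.
    * right; right; right; right; exists Z2; split => //; split => //.
      right; exists a1, b1; split => //; first by apply/(is_edgeE h1); exists a1, b1.
      move=> k l /(is_edgeE h1) [k' [l' [-> -> re]]] [hk hl].
      case: (re) => hkl skl _.
      have ap2' := O4b _ _ (Hsg _ _ skl) hk hl.
      have ntl1 : ~~ tl pi1 k' l'.
        apply/negP => t1.
        have : k' \in Z2 by rewrite eZ2; exact: (tl_ap_ii h2 ((H _ _).1 t1) ap2').
        by move/mins_lb; slia.
      have ap1 : ap pi1 k' l' by case/orP: skl => // t1; rewrite t1 in ntl1.
      case: (E3a _ _ ap1 (ltnW hkl)) => hk' hl'.
      slia.
  + right; right; left; exists Z2, Z1; do !split => //.
    by apply/subsetP => z hz; rewrite eZ2; apply: (H z z).2; rewrite -eZ1.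
- case=> /SE Hsg Hx.
  suff W : forall i j : 'I_n, i <= j ->
      (tl pi1 i j -> tl pi2 i j) /\ (ap pi1 i j -> ap pi2 i j).
    move=> i j; case: (leqP i j) => hij; first exact: W.
    case: (W j i (ltnW hij)) => W1 W2; split => hh.
      by apply: (tl_sym h2); apply: W1; apply: (tl_sym h1).
    by apply: (ap_sym h2); apply: W2; apply: (ap_sym h1).
  move=> i j hij.
  have sg_tl : tl pi1 i j -> sg pi1 i j by move=> t; rewrite /sg t.
  have sg_ap : ap pi1 i j -> sg pi1 i j by move=> t; rewrite /sg t orbT.
  have to_tl : sg pi2 i j -> ~~ ap pi2 i j -> tl pi2 i j by case/orP => // t; rewrite t.
  case: (xspecP h2) Hx => [N2 | a b re2 apab2 nz2 E3b E4b | Z2 hZ2 eZ2 neZ2 O3b O4b];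
  case: (xspecP h1) => [N1 | a1 b1 re1 apab1 nz1 E3a E4a | Z1 hZ1 eZ1 neZ1 O3a O4a] Hx.
  + split; last by rewrite (negbTE (N1 i j)).
    by move=> t; apply: to_tl (Hsg _ _ (sg_tl t)) (N2 i j).
  + by kill.
  + by kill.
  +
    have NoE : ~ (exists k l, is_edge (psi_sigma pi1) k l /\ (k <= a /\ b <= l)).
      case: Hx => [H|[H|[H|[H|H]]]]; try by kill.
      case: H => [a' [b' [e [_ U]]]].
      injection e => eb ea; subst a' b'.
      by case: U => [[NoE _]|[? [? [e' _]]]].
    split; last by rewrite (negbTE (N1 i j)).
    move=> t; apply: (to_tl (Hsg _ _ (sg_tl t))); apply/negP => ap2.
    case: (E3b _ _ ap2 hij) => hia hbj.
    have [k [l [rkl hik hka hbl hlj]]] := Espan h1 h2 Hsg re2 (sg_tl t) hia hbj.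
    apply: NoE; exists k, l; split => //.
    by apply/(is_edgeE h1); exists k, l.
  +
    case: Hx => [H|[H|[H|[H|H]]]]; try by kill.
    case: H => [a' [b' [e [_ U]]]].
    injection e => eb ea; subst a' b'.
    case: U => [[_ e0]|[i0 [j0 [e1 _ [q1 q2] Uq]]]]; first by [].
    injection e1 => ej ei; subst i0 j0.
    case: (re1) => hab1 _ _.
    split => t.
      apply: (to_tl (Hsg _ _ (sg_tl t))); apply/negP => ap2.
      case: (E3b _ _ ap2 hij) => hia hbj.
      have [k [l [rkl hik hka hbl hlj]]] := Espan h1 h2 Hsg re2 (sg_tl t) hia hbj.
      have key : i <= a1 /\ b1 <= j.
        case: (rkl) => hkl _ _; case: (re2) => hab _ _.
        have c1 : k < b1 by slia.
        have c2 : a1 < l by slia.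
        case: (nested h1 rkl re1 c1 c2) => [[x y]|[x y]]; first slia.
        have U' := Uq k l (proj2 (is_edgeE h1 k l) (ex_intro _ k (ex_intro _ l (And3 erefl erefl rkl)))) (conj hka hbl).
        case: (eqVneq (k : nat) a1) => ek; case: (eqVneq (l : nat) b1) => el; try slia;
          (have := U' ltac:(case=> ee ee'; slia)); slia.
      case: key => ha1 hb1.
      have ap1 := E4a _ _ (sg_tl t) ha1 hb1.
      by move: (nz1 i); rewrite (tl_ap_ii h1 t ap1).
    case: (E3a _ _ t hij) => ha1 hb1.
    apply: E4b; [exact: Hsg _ _ (sg_ap t) | slia | slia].
  + by kill.
  +
    have NoE : ~ (exists k l, is_edge (psi_sigma pi1) k l /\ (k < mins Z2 /\ maxs Z2 < l)).
      case: Hx => [H|[H|[H|[H|H]]]]; try by kill.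
      case: H => [B2 [e [_ U]]].
      injection e => eb; subst B2.
      by case: U => [[NoE _]|[? [? [e' _]]]].
    split; last by rewrite (negbTE (N1 i j)).
    move=> t; case: (boolP (ap pi2 i j)) => ap2; last exact: (to_tl (Hsg _ _ (sg_tl t)) ap2).
    case: (O3b _ _ ap2 hij) => [[iZ jZ]|[hi hj]]; first by case: (Zboth h2 hZ2 eZ2 iZ jZ).
    exfalso.
    have [k [l [rkl hik hka hbl hlj]]] := Zspan h1 h2 Hsg hZ2 neZ2 (sg_tl t) hi hj.
    apply: NoE; exists k, l; split => //.
    by apply/(is_edgeE h1); exists k, l.
  +
    case: (re1) => hab1 _ _.
    case: Hx => [H|[H|[H|[H|H]]]]; try (by kill);
      [case: H => [B2 [i0 [j0 [e2 [_ [e1 [_ [i' [j' [ei [ej [hi' hj']]]]]]]]]]]] | case: H => [B2 [e2 [_ U]]]].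

    * injection e2 => e2'; subst B2; injection e1 => ej0 ei0; subst i0 j0.
      have ei' : i' = a1 by apply: val_inj.
      have ej' : j' = b1 by apply: val_inj.
      subst i' j'.
      split => t.
        case: (boolP (ap pi2 i j)) => ap2; last exact: (to_tl (Hsg _ _ (sg_tl t)) ap2).
        case: (O3b _ _ ap2 hij) => [[iZ jZ]|[hi hj]]; first by case: (Zboth h2 hZ2 eZ2 iZ jZ).
        exfalso.
        have := mins_lb hi'; have := maxs_ub hj' => u1 u2.
        have c1 : i <= a1 by slia.
        have c2 : b1 <= j by slia.
        have ap1 := E4a _ _ (sg_tl t) c1 c2.
        by move: (nz1 i); rewrite (tl_ap_ii h1 t ap1).
      case: (E3a _ _ t hij) => ha1 hb1.
      have s2 := Hsg _ _ (sg_ap t).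
      case: (boolP (sg pi2 i a1)) => sia.
        have iZ : i \in Z2 by rewrite (Zblk h2 _ hZ2 hi'); exact: sg_sym.
        have jZ : j \in Z2 by rewrite (Zblk h2 _ hZ2 iZ).
        by case: (Zboth h2 hZ2 eZ2 iZ jZ).
      have hia : i < a1.
        rewrite ltn_neqAle ha1 andbT; apply/negP => /eqP e.
        by move: sia; rewrite (val_inj e) sg_refl.
      have haj : a1 < j by slia.
      case: (Zencl h2 hZ2 hi' s2 hia haj sia) => hm hM.
      exact: O4b.
    * injection e2 => e2'; subst B2.
      case: U => [[_ e0]|[i0 [j0 [e1 _ [q1 q2] Mn]]]]; first by [].
      injection e1 => ej ei; subst i0 j0.
      split => t.
        case: (boolP (ap pi2 i j)) => ap2; last exact: (to_tl (Hsg _ _ (sg_tl t)) ap2).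
        case: (O3b _ _ ap2 hij) => [[iZ jZ]|[hi hj]]; first by case: (Zboth h2 hZ2 eZ2 iZ jZ).
        exfalso.
        have [k [l [rkl hik hka hbl hlj]]] := Zspan h1 h2 Hsg hZ2 neZ2 (sg_tl t) hi hj.
        have ml := Mn k l (proj2 (is_edgeE h1 k l) (ex_intro _ k (ex_intro _ l (And3 erefl erefl rkl)))) (conj hka hbl).
        have key : i <= a1 /\ b1 <= j.
          case: (neZ2) => z hz; have := mins_lb hz; have := maxs_ub hz => u1 u2.
          case: (rkl) => hkl _ _.
          have c1 : k < b1 by clear -hka u1 u2 q2; slia.
          have c2 : a1 < l by clear -q1 u1 u2 hbl; slia.
          case: (nested h1 rkl re1 c1 c2) => [[x y]|[x y]]; clear -x y hik hlj ml hkl hab1; slia.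
        case: key => ha1 hb1.
        have ap1 := E4a _ _ (sg_tl t) ha1 hb1.
        by move: (nz1 i); rewrite (tl_ap_ii h1 t ap1).
      case: (E3a _ _ t hij) => ha1 hb1.
      apply: O4b; [exact: Hsg _ _ (sg_ap t) | slia | slia].
  +
    case: Hx => [[e _]|[[? [? [e _]]]|[H|[[? [? [? [_ [_ [e _]]]]]]|[? [_ [_ U]]]]]]];
      try by [].
      2: by case: U => [[_ e]|[? [? [e _]]]].
      case: H => [B2 [B1 [e2 [_ [e1 [_ sub]]]]]].
      injection e2 => e2'; injection e1 => e1'; subst B1 B2.
      case: (neZ1) => z0 hz0; case: (mins_mem hz0) => zm hzm ezm; case: (maxs_mem hz0) => zM hzM ezM.
      have hzm2 : zm \in Z2 by apply: (subsetP sub).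
      have hzM2 : zM \in Z2 by apply: (subsetP sub).
      split => t.
        case: (boolP (ap pi2 i j)) => ap2; last exact: (to_tl (Hsg _ _ (sg_tl t)) ap2).
        case: (O3b _ _ ap2 hij) => [[iZ jZ]|[hi hj]]; first by case: (Zboth h2 hZ2 eZ2 iZ jZ).
        exfalso.
        have := mins_lb hzm2; have := maxs_ub hzM2 => u1 u2.
        have c1 : i < mins Z1 by slia.
        have c2 : maxs Z1 < j by slia.
        have ap1 := O4a _ _ (sg_tl t) c1 c2.
        have : i \in Z1 by rewrite eZ1; exact: (tl_ap_ii h1 t ap1).
        by move/mins_lb; slia.
      case: (O3a _ _ t hij) => [[iZ jZ]|[hi hj]].
        by case: (Zboth h2 hZ2 eZ2 (subsetP sub _ iZ) (subsetP sub _ jZ)).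
      have s2 := Hsg _ _ (sg_ap t).
      case: (boolP (sg pi2 i zm)) => siz.
        have iZ : i \in Z2 by rewrite (Zblk h2 _ hZ2 hzm2); exact: sg_sym.
        have jZ : j \in Z2 by rewrite (Zblk h2 _ hZ2 iZ).
        by case: (Zboth h2 hZ2 eZ2 iZ jZ).
      have := maxs_ub hzm => u3.
      have hiz : i < zm by slia.
      have hzj : zm < j by slia.
      case: (Zencl h2 hZ2 hzm2 s2 hiz hzj siz) => hm hM.
      exact: O4b.
Qed.
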